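(* Let $G$ be a circle of circumference $1$, let $\mathbf{x}\in G^n$ be such that the agents are not on one semicircle, and let $y\in G$. Let $\mathbf{x}\cup\{y\}\in G^{n+1}$ be the profile $\mathbf{x}$ with one additional agent located at $y$. Then $\mathrm{cost}(\mathrm{rc}(\mathbf{x}),y)\ge\mathrm{cost}(\mathrm{rc}(\mathbf{x}\cup\{y\}),y)$.
   Context: $d(x,y)$ is the shorter-arc length; $\hat x$ the antipode of $x$; $\mathrm{cost}(P,y)=\mathbb{E}_{z\sim P}[d(y,z)]$. Agents are on one semicircle if all locations lie in some closed arc of length $1/2$. RC mechanism on a profile $(z_1,\dots,z_m)$ not on one semicircle: the antipodal points $\hat{z}_1,\dots,\hat{z}_m$ partition $G$ into arcs between cyclically consecutive antipodal points; $\mathrm{rc}$ returns the midpoint of each such arc with probability equal to its length. *)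

(* Defs.v *)
From Stdlib Require Import Reals Lra List.
Import ListNotations.
Open Scope R_scope.

(* The circle G of circumference 1 is R/Z; a point of G is represented by any
   real number, interpreted modulo 1.  frac_part gives the canonical
   representative in [0,1). *)

Definition ccw (a b : R) : R := frac_part (b - a).

Definition dist (x y : R) : R := Rmin (ccw x y) (ccw y x).

Definition antipode (x : R) : R := frac_part (x + / 2).

Definition on_one_semicircle (l : list R) : Prop :=
  exists c : R, Forall (fun z => ccw c z <= / 2) l.

(* a finitely supported distribution over G: list of (probability, point) *)
Definition dist_G := list (R * R).

Definition cost (P : dist_G) (y : R) : R :=
  fold_right (fun wp acc => fst wp * dist y (snd wp) + acc) 0 P.

Definition antipodes (l : list R) : list R :=
  nodup Req_EM_T (map antipode l).

(* length of the arc from a (counter-clockwise) to the next distinct point of A;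
   1 (the full circle) if there is no other point *)
Definition gap (A : list R) (a : R) : R :=
  fold_right (fun b m => if Req_EM_T b a then m else Rmin (ccw a b) m) 1 A.

(* The RC mechanism: the antipodal points partition G into arcs between
   cyclically consecutive antipodal points; return the midpoint of each arc
   with probability equal to its length. *)
Definition rc (l : list R) : dist_G :=
  let A := antipodes l in
  map (fun a => (gap A a, a + gap A a / 2)) A.

(* Main.v *)
Require Import Defs.
From Stdlib Require Import Reals List.
Import ListNotations.
Open Scope R_scope.
From Stdlib Require Import Lra Lia Permutation ZArith.
Open Scope R_scope.
Definition reqm (a b : R) := exists k : Z, a = b + IZR k.

Lemma IZR_small (k : Z) : -1 < IZR k -> IZR k < 1 -> k = 0%Z.
Proof. intros H1 H2. apply lt_IZR in H1. apply lt_IZR in H2. lia. Qed.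

Lemma fp_char (t r : R) (k : Z) : 0 <= t < 1 -> r = t + IZR k -> frac_part r = t.
Proof.
  intros Ht Hr. unfold frac_part. destruct (base_Int_part r) as [H1 H2].
  assert (Int_part r = k).
  { assert (Int_part r - k = 0)%Z; [|lia].
    apply IZR_small; rewrite minus_IZR; lra. }
  rewrite H; lra.
Qed.

Lemma ccw_char a b t : 0 <= t < 1 -> reqm b (a + t) -> ccw a b = t.
Proof. intros Ht [k Hk]. unfold ccw. apply (fp_char t _ k); lra. Qed.

Lemma ccw_range a b : 0 <= ccw a b < 1.
Proof. unfold ccw. destruct (base_fp (b - a)); lra. Qed.

Lemma ccw_eqm a b : reqm b (a + ccw a b).
Proof. exists (Int_part (b - a)). unfold ccw, frac_part. ring. Qed.

Lemma ccw_eqm_l a a' b : reqm a a' -> ccw a b = ccw a' b.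
Proof. intros [m Hm]. destruct (ccw_eqm a b) as [k Hk].
  symmetry. apply ccw_char. apply ccw_range. exists (k + m)%Z. rewrite plus_IZR; lra. Qed.

Lemma ccw_eqm_r a b b' : reqm b b' -> ccw a b = ccw a b'.
Proof. intros [m Hm]. destruct (ccw_eqm a b) as [k Hk].
  symmetry. apply ccw_char. apply ccw_range. exists (k - m)%Z. rewrite minus_IZR; lra. Qed.

Lemma ccw_add_le a b c : ccw a b <= ccw a c -> ccw b c = ccw a c - ccw a b.
Proof. intros H. destruct (ccw_eqm a b) as [k Hk]. destruct (ccw_eqm a c) as [m Hm].
  pose proof (ccw_range a b); pose proof (ccw_range a c).
  apply ccw_char. lra. exists (m - k)%Z. rewrite minus_IZR; lra. Qed.

Lemma ccw_add_gt a b c : ccw a c < ccw a b -> ccw b c = ccw a c - ccw a b + 1.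
Proof. intros H. destruct (ccw_eqm a b) as [k Hk]. destruct (ccw_eqm a c) as [m Hm].
  pose proof (ccw_range a b); pose proof (ccw_range a c).
  apply ccw_char. lra. exists (m - k - 1)%Z. rewrite !minus_IZR; simpl; lra. Qed.

Lemma ccw_self a : ccw a a = 0.
Proof. apply ccw_char. lra. exists 0%Z. simpl; lra. Qed.

Lemma ccw_back a b : ccw a b <> 0 -> ccw b a = 1 - ccw a b.
Proof. intros H. pose proof (ccw_range a b). rewrite (ccw_add_gt a b a); rewrite ?ccw_self; lra. Qed.

Lemma canon_eq a b : 0 <= a < 1 -> 0 <= b < 1 -> ccw a b = 0 -> a = b.
Proof. intros Ha Hb H. destruct (ccw_eqm a b) as [k Hk]. rewrite H in Hk.
  assert (k = 0%Z) by (apply IZR_small; lra). rewrite H0 in Hk; simpl in Hk; lra. Qed.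

Lemma dist_eqm_l a a' b : reqm a a' -> Defs.dist a b = Defs.dist a' b.
Proof. intros H. unfold Defs.dist. rewrite (ccw_eqm_l a a' b H), (ccw_eqm_r b a a' H). reflexivity. Qed.

Lemma dist_near u s : -/2 <= s <= /2 -> Defs.dist u (u + s) = Rabs s.
Proof.
  intros Hs. unfold Defs.dist.
  destruct (Rle_dec 0 s).
  - rewrite (ccw_char u (u+s) s); [|lra|exists 0%Z; simpl; lra].
    rewrite Rabs_right by lra.
    destruct (Req_dec s 0).
    + subst. rewrite Rplus_0_r, ccw_self. unfold Rmin; destruct Rle_dec; lra.
    + rewrite (ccw_char (u+s) u (1 - s)); [|lra|exists (-1)%Z; simpl; lra].
      unfold Rmin; destruct Rle_dec; lra.
  - rewrite (ccw_char u (u+s) (s+1)); [|lra|exists (-1)%Z; simpl; lra].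
    rewrite (ccw_char (u+s) u (- s)); [|lra|exists 0%Z; simpl; lra].
    rewrite Rabs_left by lra. unfold Rmin; destruct Rle_dec; lra.
Qed.

Lemma dist_half y u p : reqm y (u + /2) -> Defs.dist y p = /2 - Defs.dist u p.
Proof.
  intros [m Hm]. destruct (ccw_eqm u p) as [k Hk].
  set (t := ccw u p) in *. pose proof (ccw_range u p). fold t in H.
  unfold Defs.dist. fold t.
  destruct (Rle_dec (/2) t).
  - rewrite (ccw_char y p (t - /2)); [|lra|exists (k - m)%Z; rewrite minus_IZR; lra].
    rewrite (ccw_back u p) by (fold t; lra). fold t.
    destruct (Req_dec t (/2)).
    + rewrite (ccw_char p y 0); [|lra|exists (m - k)%Z; rewrite minus_IZR; lra].
      unfold Rmin; repeat destruct Rle_dec; lra.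
    + rewrite (ccw_char p y (3/2 - t)); [|lra|exists (m - k - 1)%Z; rewrite !minus_IZR; simpl; lra].
      unfold Rmin; repeat destruct Rle_dec; lra.
  - rewrite (ccw_char y p (t + /2)); [|lra|exists (k - m - 1)%Z; rewrite !minus_IZR; simpl; lra].
    rewrite (ccw_char p y (/2 - t)); [|lra|exists (m - k)%Z; rewrite minus_IZR; lra].
    destruct (Req_dec t 0).
    + unfold t in *. rewrite H0. rewrite (ccw_char p u 0); [|lra|exists (- k)%Z; rewrite opp_IZR; lra].
      unfold Rmin; repeat destruct Rle_dec; lra.
    + rewrite (ccw_back u p) by (fold t; lra). fold t.
      unfold Rmin; repeat destruct Rle_dec; lra.
Qed.

Lemma gap_le A a b : In b A -> b <> a -> gap A a <= ccw a b.
Proof.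
  induction A as [|c A IH]; simpl; [tauto|]. intros [->|H] Hne.
  - destruct (Req_EM_T b a); [congruence|]. apply Rmin_l.
  - destruct (Req_EM_T c a); [auto|]. eapply Rle_trans; [apply Rmin_r|auto].
Qed.

Lemma gap_le1 A a : gap A a <= 1.
Proof.
  induction A as [|c A IH]; simpl; [lra|].
  destruct (Req_EM_T c a); [auto|]. eapply Rle_trans; [apply Rmin_r|auto].
Qed.

Lemma gap_glb A a c : c <= 1 -> (forall b, In b A -> b <> a -> c <= ccw a b) -> c <= gap A a.
Proof.
  induction A as [|d A IH]; simpl; intros H1 H2; [lra|].
  destruct (Req_EM_T d a).
  - apply IH; auto.
  - apply Rmin_glb; auto.
Qed.

Lemma gap_att A a : gap A a = 1 \/ exists b, In b A /\ b <> a /\ gap A a = ccw a b.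
Proof.
  induction A as [|d A IH]; simpl; [auto|].
  destruct (Req_EM_T d a).
  - destruct IH as [H|[b [H1 [H2 H3]]]]; auto. right; exists b; auto.
  - unfold Rmin; destruct Rle_dec.
    + right; exists d; auto.
    + destruct IH as [H|[b [H1 [H2 H3]]]]; auto. right; exists b; auto.
Qed.

Lemma gap_perm A A' a : Permutation A A' -> gap A a = gap A' a.
Proof.
  induction 1; simpl; auto.
  - rewrite IHPermutation; auto.
  - destruct (Req_EM_T y a), (Req_EM_T x a); auto.
    rewrite !Rmin_assoc, (Rmin_comm (ccw a y)). auto.
  - congruence.
Qed.

Definition S (f : R -> R) (A : list R) := fold_right (fun a acc => f a + acc) 0 A.

Lemma S_perm f A A' : Permutation A A' -> S f A = S f A'.
Proof. induction 1; simpl; auto; lra. Qed.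

Lemma S_ext f g A : (forall a, In a A -> f a = g a) -> S f A = S g A.
Proof. induction A; simpl; intros H; auto. rewrite H, IHA; auto. Qed.

Lemma S_change f f' A a0 : NoDup A -> In a0 A ->
  (forall b, In b A -> b <> a0 -> f' b = f b) -> S f' A - f' a0 = S f A - f a0.
Proof.
  induction A as [|c A IH]; simpl; [tauto|]. intros Hnd Hin H.
  inversion Hnd; subst. destruct (Req_EM_T c a0).
  - subst. rewrite (S_ext f' f A). lra. intros b Hb. apply H; auto. intro; subst; tauto.
  - destruct Hin as [->|Hin]; [congruence|].
    rewrite H by auto. specialize (IH H3 Hin (fun b Hb => H b (or_intror Hb))). lra.
Qed.

Lemma cost_map B C y : cost (map (fun a => (gap B a, a + gap B a / 2)) C) y =
  S (fun a => gap B a * Defs.dist y (a + gap B a / 2)) C.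
Proof. induction C as [|c C IHC]; simpl; auto. rewrite IHC. reflexivity. Qed.

Lemma cost_rc_S l y : cost (rc l) y =
  S (fun a => gap (antipodes l) a * Defs.dist y (a + gap (antipodes l) a / 2)) (antipodes l).
Proof. apply cost_map. Qed.

Lemma argmin (h : R -> R) (A : list R) : A <> [] ->
  exists a0, In a0 A /\ forall b, In b A -> h a0 <= h b.
Proof.
  induction A as [|c A IH]; [congruence|]. intros _.
  destruct A as [|d A].
  - exists c; split; [left; auto|]. intros b [->|[]]; lra.
  - destruct IH as [a [Ha Hb]]; [congruence|].
    destruct (Rle_dec (h c) (h a)).
    + exists c; split; [left; auto|]. intros b [->|Hb']; [lra|]. specialize (Hb b Hb'); lra.
    + exists a; split; [right; auto|]. intros b [->|Hb']; [lra|auto].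
Qed.

Lemma antipode_canon z : 0 <= antipode z < 1.
Proof. unfold antipode. destruct (base_fp (z + /2)); lra. Qed.

Lemma antipodes_canon l a : In a (antipodes l) -> 0 <= a < 1.
Proof. unfold antipodes. rewrite nodup_In, in_map_iff. intros [z [<- _]]. apply antipode_canon. Qed.

Lemma antipodes_app_in l y : In (antipode y) (antipodes l) ->
  Permutation (antipodes (l ++ [y])) (antipodes l).
Proof.
  intros H. apply NoDup_Permutation; try apply NoDup_nodup.
  intros z. unfold antipodes in *. rewrite !nodup_In, map_app, in_app_iff. rewrite nodup_In in H.
  simpl. intuition. subst; auto.
Qed.

Lemma antipodes_app_notin l y : ~ In (antipode y) (antipodes l) ->
  Permutation (antipodes (l ++ [y])) (antipode y :: antipodes l).
Proof.
  intros H. apply NoDup_Permutation; try apply NoDup_nodup.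
  - constructor; auto. apply NoDup_nodup.
  - intros z. unfold antipodes in *. simpl. rewrite !nodup_In, map_app, in_app_iff.
    simpl. intuition.
Qed.

Lemma y_eqm (y : R) : reqm y (antipode y + /2).
Proof. unfold antipode, frac_part. exists (Int_part (y + /2) - 1)%Z.
  rewrite minus_IZR. simpl. lra. Qed.

Lemma key L L1 : 0 <= L1 <= L -> L <= 1 ->
  L1 * (/2 - L1/2) + (L - L1) * (/2 - (L - L1)/2) <= L * (/2 - Rabs (L/2 - L1)).
Proof.
  intros H1 H2. destruct (Rle_dec 0 (L/2 - L1)).
  - rewrite Rabs_right by lra. nra.
  - rewrite Rabs_left by lra. nra.
Qed.

Theorem mainTheorem15 (x : list R) (y : R) :
  ~ on_one_semicircle x ->
  cost (rc x) y >= cost (rc (x ++ [y])) y.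
Proof.
  intros Hns.
  assert (Hx : x <> []) by (intro; subst; apply Hns; exists 0; constructor).
  rewrite !cost_rc_S.
  set (A := antipodes x). set (A' := antipodes (x ++ [y])). set (v := antipode y).
  destruct (in_dec Req_EM_T v A) as [Hin|Hnin].
  - pose proof (antipodes_app_in x y Hin) as P. fold A A' in P.
    rewrite (S_perm _ A' A P).
    apply Req_ge. apply S_ext.
    intros a _. rewrite (gap_perm _ _ a P). reflexivity.
  - pose proof (antipodes_app_notin x y Hnin) as P. fold A A' v in P.
    rewrite (S_perm _ A' _ P).
    rewrite (S_ext _ (fun a => gap (v :: A) a * Defs.dist y (a + gap (v :: A) a / 2)) (v :: A))
      by (intros a _; rewrite (gap_perm _ _ a P); reflexivity).
    simpl S at 2.
    set (f := fun a => gap A a * Defs.dist y (a + gap A a / 2)).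
    set (f' := fun a => gap (v :: A) a * Defs.dist y (a + gap (v :: A) a / 2)).
    assert (HA : A <> []).
    { destruct x as [|z x']; [congruence|]. intro HA.
      assert (In (antipode z) A) by (unfold A, antipodes; rewrite nodup_In; left; auto).
      rewrite HA in H; exact H. }
    destruct (argmin (fun a => ccw a v) A HA) as [a0 [Ha0 Hmin]].
    assert (Hcan : forall a, In a A -> 0 <= a < 1) by apply antipodes_canon.
    assert (Hvc : 0 <= v < 1) by apply antipode_canon.
    assert (Hav : a0 <> v) by (intro; subst; tauto).
    set (L1 := ccw a0 v). set (L := gap A a0).
    assert (HL1r : 0 <= L1 < 1) by apply ccw_range.
    assert (HL1nz : L1 <> 0) by (intro Hz; apply Hav; apply canon_eq; auto).
    assert (H1 : forall b, In b A -> b <> a0 -> L1 <= ccw a0 b).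
    { intros b Hb Hne. destruct (Rle_dec L1 (ccw a0 b)) as [|Hlt]; auto.
      assert (ccw a0 b <> 0) by (intro Hz; apply Hne; symmetry; apply canon_eq; auto).
      pose proof (ccw_range a0 b).
      pose proof (ccw_add_le a0 b v ltac:(fold L1; lra)) as Hadd. specialize (Hmin b Hb). simpl in Hmin.
      fold L1 in Hadd, Hmin. lra. }
    assert (HL1L : L1 <= L) by (apply gap_glb; auto; lra).
    assert (HL1 : L <= 1) by apply gap_le1.
    assert (Hother : forall b, In b A -> b <> a0 -> f' b = f b).
    { intros b Hb Hne. unfold f, f'. simpl gap.
      destruct (Req_EM_T v b) as [->|_]; [tauto|].
      assert (gap A b <= ccw b v).
      { eapply Rle_trans. apply (gap_le A b a0); auto.
        destruct (Rle_dec (ccw b a0) (ccw b v)); auto.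
        pose proof (ccw_add_gt b a0 v ltac:(lra)). specialize (Hmin b Hb). simpl in Hmin.
        pose proof (ccw_range b a0). lra. }
      rewrite Rmin_right by auto. reflexivity. }
    assert (Hnd : NoDup A) by apply NoDup_nodup.
    pose proof (S_change f f' A a0 Hnd Ha0 Hother) as HS.
    assert (Hg0 : gap (v :: A) a0 = L1).
    { simpl. destruct (Req_EM_T v a0); [congruence|]. apply Rmin_left. auto. }
    assert (Hback : ccw v a0 = 1 - L1) by (apply ccw_back; auto).
    assert (Hgv : gap (v :: A) v = L - L1).
    { simpl. destruct (Req_EM_T v v) as [_|]; [|congruence].
      apply Rle_antisym.
      - destruct (gap_att A a0) as [HL|[b [Hb [Hne HL]]]]; fold L in HL.
        + eapply Rle_trans. apply (gap_le A v a0); auto. lra.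
        + eapply Rle_trans. apply (gap_le A v b); auto. intro; subst; tauto.
          rewrite (ccw_add_le a0 v b) by (fold L1; apply H1; auto). fold L1. lra.
      - apply gap_glb. lra. intros b Hb Hne.
        destruct (Req_EM_T b a0) as [->|Hne'].
        + lra.
        + rewrite (ccw_add_le a0 v b) by (fold L1; apply H1; auto). fold L1.
          pose proof (gap_le A a0 b Hb Hne'). fold L in H. lra. }
    assert (Hfa0 : f a0 = L * (/2 - Rabs (L/2 - L1))).
    { unfold f. fold L. rewrite (dist_half y v _ (y_eqm y)).
      rewrite (dist_eqm_l v (a0 + L1)) by apply ccw_eqm.
      replace (a0 + L/2) with ((a0 + L1) + (L/2 - L1)) by ring.
      rewrite dist_near by lra. reflexivity. }
    assert (Hf'a0 : f' a0 = L1 * (/2 - L1/2)).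
    { unfold f'. rewrite Hg0. rewrite (dist_half y v _ (y_eqm y)).
      rewrite (dist_eqm_l v (a0 + L1)) by apply ccw_eqm.
      replace (a0 + L1/2) with ((a0 + L1) + (- (L1/2))) by lra.
      rewrite dist_near by lra. rewrite Rabs_left1 by lra. ring. }
    assert (Hf'v : f' v = (L - L1) * (/2 - (L - L1)/2)).
    { unfold f'. rewrite Hgv. rewrite (dist_half y v _ (y_eqm y)).
      rewrite dist_near by lra. rewrite Rabs_right by lra. reflexivity. }
    pose proof (key L L1 (conj (proj1 HL1r) HL1L) HL1). change (S f A >= f' v + S f' A). lra.
Qed.
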